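(* Let $n\ge 3$ and $\mathbf h\in\mathbb{R}^{\binom{n+1}{2}}$, decomposed as $\mathbf h=(\mathbf h_0,\mathbf h_1,\mathbf h_2)$. Assume $J_{n,2}\mathbf h\ge 0$ and $\mathbf h_2\not\ge 0$. Then $$P(\mathbf h_1)\ge 1,\quad R(J_{n-1,0}\mathbf h_0+\mathbf h_1)\ge 1,\quad R(J_{n-1,1}\mathbf h_1+\mathbf h_2)\ge 1.$$
   Context: For a real vector $\mathbf x$, $P(\mathbf x)$ is the number of positive components and $R(\mathbf x)$ the number of nonzero components; inequalities are componentwise, and $\mathbf x\not\ge 0$ means some component is negative. $J_{m,j}$ is the matrix, with respect to the left lexicographic bases of degree-$j$ and degree-$(j+1)$ monomials in $m$ variables, of multiplication by the sum of the variables ($J_{n,j}$ in $x_1,\dots,x_n$, $J_{n-1,j}$ in $x_2,\dots,x_n$). If $\mathbf h$ is the coordinate vector of the quadratic form $A(x)=x_1^2A_0+x_1A_1(x_2,\dots,x_n)+A_2(x_2,\dots,x_n)$ ($A_j$ homogeneous of degree $j$), then $\mathbf h_j$ is the coordinate vector of $A_j$ in the left lexicographic basis of degree-$j$ monomials in $x_2,\dots,x_n$. *)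

(* Defs.v *)
From HB Require Import structures.
From mathcomp Require Import all_boot all_order all_algebra.
Set Implicit Arguments. Unset Strict Implicit. Unset Printing Implicit Defensive.
Import Order.TTheory GRing.Theory Num.Theory.
Local Open Scope ring_scope.

(* Exponent vectors (length m) of the degree-j monomials in m variables,
   listed in the left lexicographic order x1^j > x1^(j-1) x2 > ... *)
Fixpoint mons (m j : nat) : seq (seq nat) :=
  match m with
  | 0 => if j == 0%N then [:: [::]] else [::]
  | m'.+1 => flatten [seq [seq (j - i)%N :: s | s <- mons m' i] | i <- iota 0 j.+1]
  end.

(* J_{m,j}: matrix of multiplication by x_1 + ... + x_m from degree j to degree j+1,
   w.r.t. the left lexicographic bases. Entry (r,c) counts the k with
   monomial r = x_k * monomial c. *)
Definition Jmx (R : pzRingType) (m j : nat) :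
  'M[R]_(size (mons m j.+1), size (mons m j)) :=
  \matrix_(r, c) (\sum_(k < m)
     ((nth [::] (mons m j.+1) r == incr_nth (nth [::] (mons m j) c) k) : nat)%:R).

(* the i-th coordinate of a column vector (0 if out of range) *)
Definition coord_at (R : pzRingType) (k : nat) (v : 'cV[R]_k) (i : nat) : R :=
  \sum_(r < k | nat_of_ord r == i) v r 0.

(* For h the coordinate vector of the quadratic form
   A = x1^2 A0 + x1 A1(x2..xn) + A2(x2..xn) in n variables, hpart n j h is the
   coordinate vector of A_j in the left lexicographic basis of degree-j monomials
   in x2..xn. *)
Definition hpart (R : pzRingType) (n j : nat) (h : 'cV[R]_(size (mons n 2))) :
  'cV[R]_(size (mons n.-1 j)) :=
  \col_i coord_at h (index ((2 - j)%N :: nth [::] (mons n.-1 j) i) (mons n 2)).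

Arguments hpart {R} n j h.

Definition Ppos (R : numDomainType) (k : nat) (x : 'cV[R]_k) : nat :=
  #|[set i : 'I_k | 0 < x i 0]|.
Definition Rnz (R : numDomainType) (k : nat) (x : 'cV[R]_k) : nat :=
  #|[set i : 'I_k | x i 0 != 0]|.

Definition nonneg (R : numDomainType) (k : nat) (x : 'cV[R]_k) : Prop :=
  forall i, 0 <= x i 0.

Example mons_3_2 : mons 3 2 = [:: [:: 2;0;0]; [:: 1;1;0]; [:: 1;0;1];
                                  [:: 0;2;0]; [:: 0;1;1]; [:: 0;0;2]]%N.
Proof. by []. Qed.
Example size_mons_small :
  [seq size (mons n 2) | n <- iota 1 6] = [seq 'C(n.+1, 2) | n <- iota 1 6].
Proof. by []. Qed.

(* Main.v *)
Require Import Defs.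
From mathcomp Require Import all_boot all_order all_algebra.
Import Order.TTheory GRing.Theory Num.Theory.
Set Implicit Arguments. Unset Strict Implicit.

Lemma monsS m j : mons m.+1 j =
  flatten [seq [seq (j - i)%N :: s | s <- mons m i] | i <- iota 0 j.+1].
Proof. by []. Qed.

Lemma mem_mons m j s : (s \in mons m j) = (size s == m) && (sumn s == j).
Proof.
elim: m j s => [|m IH] j s; first by case: j => [|j]; case: s => [|a s].
rewrite monsS; apply/idP/idP.
  move/flattenP=> [l /mapP [i hi ->] /mapP [t ht ->]].
  move: hi; rewrite mem_iota add0n ltnS => /andP[_ hij].
  move: ht; rewrite IH => /andP[/eqP st /eqP ht] /=.
  by rewrite st ht eqxx (subnK hij) eqxx.
case: s => [|a s] // /andP[/eqP [hs] /eqP ha].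
apply/flattenP; exists [seq (j - sumn s)%N :: s0 | s0 <- mons m (sumn s)] ; last first.
  apply/mapP; exists s; first by rewrite IH hs !eqxx.
  by rewrite -ha addnK.
apply/mapP; exists (sumn s) => //.
by rewrite mem_iota add0n ltnS -ha leq_addl.
Qed.

Lemma uniq_mons m j : uniq (mons m j).
Proof.
elim: m j => [|m IH] j; first by case: j.
rewrite monsS.
have : forall l, uniq l -> all (fun i => i <= j)%N l ->
  uniq (flatten [seq [seq (j - i)%N :: s | s <- mons m i] | i <- l]).
  elim=> [|x l IHl] //= /andP[xl ul] /andP[xj al].
  rewrite cat_uniq IHl // andbT map_inj_uniq ?IH //; last by move=> a b [].
  apply/hasPn=> s /flattenP [t /mapP [i il ->] /mapP [u _ ->]].
  apply/mapP=> [[v _ [e _]]].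
  move/allP: al => /(_ i il) ij.
  have : i = x.
    by apply/eqP; rewrite -(eqn_add2r (j - i)) {1}subnKC // e subnKC.
  by move=> eix; move: xl; rewrite -eix il.
apply; first exact: iota_uniq.
by apply/allP=> i; rewrite mem_iota add0n ltnS => /andP[].
Qed.

Lemma incr_nthE (s r : seq nat) m k : size s = m -> size r = m -> (k < m)%N ->
  (r == incr_nth s k) = (0 < nth 0 r k)%N && (s == set_nth 0 r k (nth 0 r k).-1).
Proof.
move=> ss sr km; apply/eqP/andP.
  move=> ->; rewrite nth_incr_nth eqxx add1n; split=> //.
  apply/eqP/(@eq_from_nth _ 0).
    by rewrite size_set_nth size_incr_nth ss km; apply/esym/maxn_idPr.
  move=> i _; rewrite nth_set_nth /= nth_incr_nth.
  by case: eqP => [<-|/eqP ne]; rewrite ?eqxx // eq_sym (negPf ne).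
move=> [h0 /eqP ->]; apply/(@eq_from_nth _ 0).
  by rewrite size_incr_nth size_set_nth sr (maxn_idPr km) km.
move=> i _; rewrite nth_incr_nth nth_set_nth /=.
by case: eqP => [<-|/eqP ne]; rewrite ?eqxx ?add1n ?prednK // eq_sym (negPf ne).
Qed.

Lemma nth_le_sumn (s : seq nat) k : (nth 0 s k <= sumn s)%N.
Proof.
elim: s k => [|a s IH] [|k] //=; first exact: leq_addr.
exact: leq_trans (IH k) (leq_addl _ _).
Qed.

Definition um m p c := set_nth 0 (nseq m 0%N) p c.

Lemma size_um m p c : (p < m)%N -> size (um m p c) = m.
Proof. by move=> pm; rewrite size_set_nth size_nseq; apply/maxn_idPr. Qed.

Lemma sumn_um m p c : (p < m)%N -> sumn (um m p c) = c.
Proof.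
rewrite /um; elim: m p => [|m IH] [|p] //= pm.
  by rewrite sumn_nseq mul0n addn0.
by rewrite add0n IH.
Qed.

Lemma nth_um m p c k : nth 0 (um m p c) k = if k == p then c else 0%N.
Proof. by rewrite nth_set_nth /= nth_nseq; case: eqP => //; case: ifP. Qed.

Lemma sumn0_nseq (s : seq nat) : sumn s = 0%N -> s = nseq (size s) 0%N.
Proof. by elim: s => [|a s IH] //=; case: a => //= /IH <-. Qed.

Lemma deg1 (s : seq nat) : sumn s = 1%N -> exists2 p, (p < size s)%N & s = um (size s) p 1.
Proof.
elim: s => [|a s IH] //=; case: a => [|[|a]] //=.
  by rewrite add0n => /IH [p ps e]; exists p.+1 => //; rewrite {1}e.
by rewrite add1n => [[/sumn0_nseq e]]; exists 0%N => //; rewrite /um /= -e.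
Qed.

From mathcomp Require Import lra.
Local Open Scope ring_scope.

Section FlSec.
Variable R : realFieldType.

Definition Fl (L : seq (seq nat)) (v : 'cV[R]_(size L)) (s : seq nat) : R :=
  \sum_(c < size L | nth [::] L c == s) v c 0.

Lemma Fl_nth L (v : 'cV[R]_(size L)) (i : 'I_(size L)) :
  uniq L -> Fl v (nth [::] L i) = v i 0.
Proof.
move=> uL; rewrite /Fl (big_pred1 i) // => c /=.
by rewrite nth_uniq.
Qed.

Lemma Fl_out L (v : 'cV[R]_(size L)) s : s \notin L -> Fl v s = 0.
Proof.
move=> hs; rewrite /Fl big_pred0 // => c; apply/negbTE.
by apply: contra hs => /eqP <-; apply: mem_nth.
Qed.

Lemma coord_Fl L (v : 'cV[R]_(size L)) s : uniq L -> coord_at v (index s L) = Fl v s.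
Proof.
move=> uL; rewrite /coord_at /Fl; apply: eq_bigl => c.
case: (boolP (s \in L)) => hs.
  apply/eqP/eqP => [->|<-]; first exact: nth_index.
  by rewrite index_uniq.
rewrite (memNindex hs) (ltn_eqF (ltn_ord c)).
apply/esym/negbTE; apply: contra hs => /eqP <-; exact: mem_nth.
Qed.

Lemma hpartE n j (h : 'cV[R]_(size (mons n 2))) i :
  hpart n j h i 0 = Fl h ((2 - j)%N :: nth [::] (mons n.-1 j) i).
Proof. by rewrite /hpart mxE coord_Fl // uniq_mons. Qed.

Lemma Fl_add L (v w : 'cV[R]_(size L)) s : Fl (v + w) s = Fl v s + Fl w s.
Proof. by rewrite /Fl -big_split; apply: eq_bigr => c _; rewrite mxE. Qed.

Lemma Fl_ge0 L (v : 'cV[R]_(size L)) s : nonneg v -> 0 <= Fl v s.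
Proof. by move=> hv; apply: sumr_ge0 => c _. Qed.

Lemma FlJ m j (v : 'cV[R]_(size (mons m j))) r : r \in mons m j.+1 ->
  Fl (Jmx R m j *m v) r = \sum_(k < m)
    (if (0 < nth 0 r k)%N then Fl v (set_nth 0 r k (nth 0 r k).-1) else 0).
Proof.
move=> hr; have hi : (index r (mons m j.+1) < size (mons m j.+1))%N by rewrite index_mem.
rewrite -{1}(nth_index [::] hr) -[index r _]/(nat_of_ord (Ordinal hi)) Fl_nth ?uniq_mons //.
rewrite mxE.
under eq_bigr do rewrite mxE mulr_suml.
rewrite exchange_big /=; apply: eq_bigr => k _.
have sr : size r = m by move: hr; rewrite mem_mons => /andP[/eqP].
have E : forall c : 'I_(size (mons m j)),
  (nth [::] (mons m j.+1) (Ordinal hi) == incr_nth (nth [::] (mons m j) c) k) =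
  (0 < nth 0 r k)%N && (nth [::] (mons m j) c == set_nth 0 r k (nth 0 r k).-1).
  move=> c /=; rewrite (nth_index [::] hr); apply: (incr_nthE (m := m)) => //.
  by move: (mem_nth [::] (ltn_ord c)); rewrite mem_mons => /andP[/eqP].
case: ifP => hk.
  rewrite /Fl [RHS]big_mkcond; apply: eq_bigr => c _; rewrite E hk /=.
  by case: eqP => _; rewrite ?mul1r ?mul0r.
by apply: big1 => c _; rewrite E hk /= mul0r.
Qed.

End FlSec.

Theorem lemma4p1 (R : realFieldType) (n : nat) (hn : (3 <= n)%N)
  (h : 'cV[R]_(size (mons n 2))) :
  nonneg (Jmx R n 2 *m h) ->
  (exists i, hpart n 2 h i 0 < 0) ->
  [/\ (1 <= Ppos (hpart n 1 h))%N,
      (1 <= Rnz (Jmx R n.-1 0 *m hpart n 0 h + hpart n 1 h))%N &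
      (1 <= Rnz (Jmx R n.-1 1 *m hpart n 1 h + hpart n 2 h))%N].
Proof.
case: n hn h => [|n'] // _ h hJ [i0 hi0].
set a := fun s => Fl h s.
have J2 : forall r, r \in mons n'.+1 3 -> 0 <= \sum_(k < n'.+1)
    (if (0 < nth 0 r k)%N then a (set_nth 0 r k (nth 0 r k).-1) else 0).
  by move=> r hr; rewrite /a -FlJ //; apply: Fl_ge0.
have SA : forall s, s \in mons n' 0 -> 0 <= a (2%N :: s).
  move=> s; rewrite mem_mons => /andP[/eqP ss /eqP s0].
  have := J2 (3%N :: s); rewrite mem_mons /= ss s0 !eqxx => /(_ isT).
  rewrite big_ord_recl /= big1 ?addr0 // => k _.
  by rewrite add0n; move: (nth_le_sumn s k); rewrite s0 leqn0 => /eqP ->.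
have SB : exists i, 0 < hpart n'.+1 1 h i 0.
  case: (boolP [exists i, 0 < hpart n'.+1 1 h i 0]) => [/existsP //|].
  rewrite negb_exists => /forallP hneg.
  have h1 : forall t, a (1%N :: t) <= 0.
    move=> t; case: (boolP (t \in mons n' 1)) => ht.
      have hit : (index t (mons n' 1) < size (mons n' 1))%N by rewrite index_mem.
      have := hneg (Ordinal hit); rewrite -leNgt hpartE /= (nth_index [::] ht) //.
    rewrite /a Fl_out //; apply: contra ht; rewrite !mem_mons /= eqSS.
    by rewrite (eqn_add2l 1 _ 1).
  set e := nth [::] (mons n' 2) i0.
  have he : e \in mons n' 2 by apply: mem_nth.
  move: (he); rewrite mem_mons => /andP[/eqP sze /eqP she].
  have := J2 (1%N :: e); rewrite mem_mons /= ?eqSS sze she !eqxx => /(_ isT).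
  rewrite big_ord_recl /=.
  have : \sum_(i < n') (if (0 < nth 0 (1%N :: e) (lift ord0 i))%N
      then a (set_nth 0 (1%N :: e) (lift ord0 i) (nth 0 (1%N :: e) (lift ord0 i)).-1)
      else 0) <= 0.
    apply: sumr_le0 => k _; rewrite lift0 /=; case: ifP => // _; exact: h1.
  move: hi0; rewrite hpartE /= -/e -/(a _) subnn => h0 hS hJ'.
  have := le_trans hJ' (lerD (lexx _) hS); rewrite addr0 => /(lt_le_trans h0).
  by rewrite ltxx.
case: SB => i hi.
split.
- by rewrite /Ppos card_gt0; apply/set0Pn; exists i; rewrite inE.
- rewrite /Rnz card_gt0; apply/set0Pn; exists i; rewrite inE mxE.
  apply: lt0r_neq0; apply: ltr_wpDl hi; rewrite mxE; apply: sumr_ge0 => c _.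
  apply: mulr_ge0; first by rewrite mxE; apply: sumr_ge0 => k _; apply: ler0n.
  by rewrite hpartE; apply: SA; apply: mem_nth.
- set t := nth [::] (mons n' 1) i.
  have ht : t \in mons n' 1 by apply: mem_nth.
  move: (ht); rewrite mem_mons => /andP[/eqP st /eqP s1].
  have [p pn te] := deg1 s1; rewrite st in pn te.
  set e := um n' p 2.
  have he : e \in mons n' 2 by rewrite mem_mons size_um // sumn_um // !eqxx.
  have hie : (index e (mons n' 2) < size (mons n' 2))%N by rewrite index_mem.
  have EE : forall M : 'cV[R]_(size (mons n' 2)), M (Ordinal hie) 0 = Fl M e.
    by move=> M; rewrite -Fl_nth ?uniq_mons //= (nth_index [::] he).
  have P2 : 0 <= Fl (hpart n'.+1 2 h) e.
    rewrite -EE (hpartE (j:=2) h (Ordinal hie)) (nth_index [::] he) subnn.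
    have hf : (0%N :: um n' p 3) \in mons n'.+1 3.
      by rewrite mem_mons /= size_um // sumn_um // !eqxx.
    have := J2 _ hf; rewrite big_ord_recl /= add0r (bigD1 (Ordinal pn)) //= big1 ?addr0.
      by rewrite add0n nth_um eqxx /um set_set_nth eqxx.
    move=> k; rewrite -val_eqE /= => /negbTE kp.
    by rewrite add0n nth_um kp.
  have P1 : 0 < Fl (Jmx R n' 1 *m hpart n'.+1 1 h) e.
    rewrite FlJ // (bigD1 (Ordinal pn)) //= big1 ?addr0.
      rewrite nth_um eqxx /um set_set_nth eqxx -/(um n' p 1) -te /t.
      by rewrite Fl_nth ?uniq_mons.
    move=> k; rewrite -val_eqE /= => /negbTE kp.
    by rewrite nth_um kp.
  rewrite /Rnz card_gt0; apply/set0Pn; exists (Ordinal hie); rewrite inE.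
  rewrite EE Fl_add gt_eqF //.
  exact: ltr_wpDr P2 P1.
Qed.
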